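(* Let $s,x,y,t\in\mathbb{C}$ with $sy+xt+1=x^2+y^2$. Let $F$ be a symmetric signature of arity $r+1$ and $G$ a symmetric signature of arity $w+1$ on $\{R,G,B\}$ ($r,w\ge0$), both generalized Fibonacci gates with parameters $s,x,y,t$. Define $H:\{R,G,B\}^{r+w}\to\mathbb{C}$ by $H(y_1,\dots,y_{r+w})=\sum_{z\in\{R,G,B\}}F(y_1,\dots,y_r,z)\,G(y_{r+1},\dots,y_{r+w},z)$. Then $H$ is symmetric and is a generalized Fibonacci gate with parameters $s,x,y,t$.
   Context: A signature of arity $n$ on $\{R,G,B\}$ is a function $\{R,G,B\}^n\to\mathbb{C}$; symmetric means invariant under permutations of its variables, and then $g_{i,j,k}$ denotes its value on inputs with $i$ entries $R$, $j$ entries $G$, $k$ entries $B$. A symmetric signature $g$ of arity $n\ge2$ is a generalized Fibonacci gate with parameters $s,x,y,t$ (where $sy+xt+1=x^2+y^2$) if for all $i,j,k\ge0$ with $i+j+k=n$, $i\ge2$: $g_{i-2,j+2,k}=g_{i,j,k}+s\,g_{i-1,j+1,k}+x\,g_{i-1,j,k+1}$, $g_{i-2,j+1,k+1}=x\,g_{i-1,j+1,k}+y\,g_{i-1,j,k+1}$, $g_{i-2,j,k+2}=g_{i,j,k}+y\,g_{i-1,j+1,k}+t\,g_{i-1,j,k+1}$. Signatures of arity $\le1$ are considered generalized Fibonacci gates for any parameters. *)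

(* Defs.v *)
From HB Require Import structures.
From mathcomp Require Import all_boot all_order all_algebra all_fingroup complex.
From mathcomp Require Import Rstruct.
Set Implicit Arguments. Unset Strict Implicit. Unset Printing Implicit Defensive.
Import GRing.Theory.
Local Open Scope ring_scope.

Definition CC : fieldType := (Rdefinitions.R)[i].

Inductive color := cR | cG | cB.
Definition color_code (c : color) : 'I_3 :=
  match c with cR => inord 0 | cG => inord 1 | cB => inord 2 end.
Definition color_decode (i : 'I_3) : color :=
  match val i with 0 => cR | 1 => cG | _ => cB end.
Lemma color_codeK : cancel color_code color_decode.
Proof. by case; rewrite /color_decode /= inordK. Qed.
HB.instance Definition _ := Finite.copy color (can_type color_codeK).

Definition signature (n : nat) := {ffun 'I_n -> color} -> CC.

Definition sym_signature n (f : signature n) : Prop :=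
  forall (p : 'S_n) (u : {ffun 'I_n -> color}), f [ffun m => u (p m)] = f u.

(* the canonical input with i entries R, then j entries G, then the rest B;
   when i + j + k = n it has exactly i R's, j G's and k B's *)
Definition canon_input n (i j : nat) : {ffun 'I_n -> color} :=
  [ffun m : 'I_n => if (m < i)%N then cR else if (m < i + j)%N then cG else cB].

(* g_{i,j,k} for a symmetric signature g (k is determined by n - i - j) *)
Definition gval n (g : signature n) (i j k : nat) : CC := g (canon_input n i j).

Definition gen_fib_gate n (g : signature n) (s x y t : CC) : Prop :=
  (n <= 1)%N \/
  forall i j k : nat, (i + j + k)%N = n -> (2 <= i)%N ->
    [/\ gval g (i-2) (j+2) k = gval g i j k + s * gval g (i-1) (j+1) k
                               + x * gval g (i-1) j (k+1),
        gval g (i-2) (j+1) (k+1) = x * gval g (i-1) (j+1) k + y * gval g (i-1) j (k+1)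
      & gval g (i-2) j (k+2) = gval g i j k + y * gval g (i-1) (j+1) k
                               + t * gval g (i-1) j (k+1)].

Definition inputs n (u : {ffun 'I_n -> color}) : seq color := [seq u m | m <- enum 'I_n].

Definition contract r w (F : signature r.+1) (G : signature w.+1) : signature (r + w) :=
  fun u => \sum_(z : color)
    F [ffun m : 'I_r.+1 => if (m < r)%N then nth cR (inputs u) m else z]
    * G [ffun m : 'I_w.+1 => if (m < w)%N then nth cR (inputs u) (r + m) else z].

(* Main.v *)
Require Import Defs.
From mathcomp Require Import all_boot all_algebra all_fingroup complex.
From mathcomp Require Import ring zify.
Import GRing.Theory.
Local Open Scope ring_scope.

Record tri := Tri { c0 : CC; c1 : CC; c2 : CC }.

Section Alg.
Variables s x y t : CC.
Hypothesis hc : s * y + x * t + 1 = x ^+ 2 + y ^+ 2.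

Definition vadd (a b : tri) := Tri (c0 a + c0 b) (c1 a + c1 b) (c2 a + c2 b).
Definition vscale (c : CC) (a : tri) := Tri (c * c0 a) (c * c1 a) (c * c2 a).
Definition mulG (m : tri) := Tri (c1 m) (c0 m + s * c1 m + x * c2 m) (x * c1 m + y * c2 m).
Definition mulB (m : tri) := Tri (c2 m) (x * c1 m + y * c2 m) (c0 m + y * c1 m + t * c2 m).
Definition e0 := Tri 1 0 0.
Definition dot (f m : tri) := c0 f * c0 m + c1 f * c1 m + c2 f * c2 m.
Definition mulc (z : color) m := match z with cR => m | cG => mulG m | cB => mulB m end.
Definition M j k := iter j mulG (iter k mulB e0).

Lemma byc_lem (a b c : CC) : a - b = (x^+2+y^+2 - (s*y+x*t+1)) * c -> a = b.
Proof. by rewrite -hc subrr mul0r => /eqP; rewrite subr_eq0 => /eqP. Qed.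

Lemma R1 m : mulG (mulG m) = vadd m (vadd (vscale s (mulG m)) (vscale x (mulB m))).
Proof. case: m => a b c; rewrite /mulG /mulB /vadd /vscale /=; congr Tri; try ring.
by apply: (@byc_lem _ _ c); ring. Qed.
Lemma R2 m : mulG (mulB m) = vadd (vscale x (mulG m)) (vscale y (mulB m)).
Proof. case: m => a b c; rewrite /mulG /mulB /vadd /vscale /=; congr Tri; try ring.
by apply: (@byc_lem _ _ (-c)); ring. Qed.
Lemma R3 m : mulB (mulG m) = vadd (vscale x (mulG m)) (vscale y (mulB m)).
Proof. case: m => a b c; rewrite /mulG /mulB /vadd /vscale /=; congr Tri; try ring.
by apply: (@byc_lem _ _ (-b)); ring. Qed.
Lemma R4 m : mulB (mulB m) = vadd m (vadd (vscale y (mulG m)) (vscale t (mulB m))).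
Proof. case: m => a b c; rewrite /mulG /mulB /vadd /vscale /=; congr Tri; try ring.
by apply: (@byc_lem _ _ b); ring. Qed.

Lemma MB j k : M j k.+1 = mulB (M j k).
Proof. rewrite /M; elim: j => [//|j IH] /=. by rewrite IH R2 R3. Qed.
Lemma MG j k : M j.+1 k = mulG (M j k).
Proof. by []. Qed.
Lemma MGi j k a : iter a mulG (M j k) = M (j + a) k.
Proof. elim: a => [|a IH] /=; first by rewrite addn0. by rewrite IH addnS. Qed.
Lemma MBi j k a : iter a mulB (M j k) = M j (k + a).
Proof. elim: a => [|a IH] /=; first by rewrite addn0. by rewrite IH addnS MB. Qed.

Lemma color_decodeK : cancel color_decode color_code.
Proof. case=> [[|[|[|n]]] Hn] //=; apply/val_inj; rewrite /= inordK //. Qed.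
Lemma sum3 (E : color -> CC) : \sum_(z : color) E z = E cR + E cG + E cB.
Proof.
rewrite (reindex color_decode); last by exists color_code => z _; [apply: color_decodeK| apply: color_codeK].
rewrite !big_ord_recl big_ord0 /= addr0 addrA.
by rewrite /color_decode /=.
Qed.

Definition Bil f g P Q := \sum_(z : color) dot f (mulc z P) * dot g (mulc z Q).

Lemma BilG f g P Q : Bil f g (mulG P) Q = Bil f g P (mulG Q).
Proof.
rewrite /Bil !sum3 /mulc R1 R3 R1 R3.
move: (mulG P) (mulB P) (mulG Q) (mulB Q) => a b c d.
rewrite /dot /vadd /vscale; cbn [c0 c1 c2]; ring.
Qed.
Lemma BilB f g P Q : Bil f g (mulB P) Q = Bil f g P (mulB Q).
Proof.
rewrite /Bil !sum3 /mulc R2 R4 R2 R4.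
move: (mulG P) (mulB P) (mulG Q) (mulB Q) => a b c d.
rewrite /dot /vadd /vscale; cbn [c0 c1 c2]; ring.
Qed.
Lemma BilGi f g a P Q : Bil f g P (iter a mulG Q) = Bil f g (iter a mulG P) Q.
Proof. elim: a P => [//|a IH] P /=. by rewrite -BilG IH -iterSr. Qed.
Lemma BilBi f g a P Q : Bil f g P (iter a mulB Q) = Bil f g (iter a mulB P) Q.
Proof. elim: a P => [//|a IH] P /=. by rewrite -BilB IH -iterSr. Qed.

Lemma BilM f g j1 k1 j2 k2 : Bil f g (M j1 k1) (M j2 k2) = Bil f g (M (j1 + j2) (k1 + k2)) e0.
Proof. by rewrite {2}/M BilGi BilBi MGi MBi. Qed.

Lemma Bil_add f g P1 P2 Q : Bil f g (vadd P1 P2) Q = Bil f g P1 Q + Bil f g P2 Q.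
Proof. case: P1 P2 Q => ? ? ? [? ? ?] [? ? ?]; rewrite /Bil !sum3 /dot /mulc /mulG /mulB /vadd; cbn [c0 c1 c2]; ring. Qed.
Lemma Bil_scale f g c P Q : Bil f g (vscale c P) Q = c * Bil f g P Q.
Proof. case: P Q => ? ? ? [? ? ?]; rewrite /Bil !sum3 /dot /mulc /mulG /mulB /vscale; cbn [c0 c1 c2]; ring. Qed.
Lemma dot_add f P1 P2 : dot f (vadd P1 P2) = dot f P1 + dot f P2.
Proof. rewrite /dot /vadd; cbn [c0 c1 c2]; ring. Qed.
Lemma dot_scale f c P : dot f (vscale c P) = c * dot f P.
Proof. rewrite /dot /vscale; cbn [c0 c1 c2]; ring. Qed.

Lemma M_rec1 j k : M j.+2 k = vadd (M j k) (vadd (vscale s (M j.+1 k)) (vscale x (M j k.+1))).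
Proof. by rewrite !MB !MG R1. Qed.
Lemma M_rec2 j k : M j.+1 k.+1 = vadd (vscale x (M j.+1 k)) (vscale y (M j k.+1)).
Proof. by rewrite !MB !MG R3. Qed.
Lemma M_rec3 j k : M j k.+2 = vadd (M j k) (vadd (vscale y (M j.+1 k)) (vscale t (M j k.+1))).
Proof. by rewrite !MB !MG R4. Qed.

End Alg.

Lemma eqRG : (cR == cG) = false. Proof. by apply/eqP. Qed.
Lemma eqRB : (cR == cB) = false. Proof. by apply/eqP. Qed.
Lemma eqGR : (cG == cR) = false. Proof. by apply/eqP. Qed.
Lemma eqGB : (cG == cB) = false. Proof. by apply/eqP. Qed.
Lemma eqBR : (cB == cR) = false. Proof. by apply/eqP. Qed.
Lemma eqBG : (cB == cG) = false. Proof. by apply/eqP. Qed.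
Definition eqC := (eqRG, eqRB, eqGR, eqGB, eqBR, eqBG, eqxx).

Lemma count3 (l : seq color) :
  (count_mem cR l + count_mem cG l + count_mem cB l)%N = size l.
Proof. elim: l => [//|[] l IH] /=; rewrite ?eqC /= ?add0n ?add1n ?addSn ?addnS ?addSn; congr S; exact: IH. Qed.

Lemma perm_counts (l1 l2 : seq color) :
  (forall c, count_mem c l1 = count_mem c l2) -> perm_eq l1 l2.
Proof. by move=> H; apply/allP => c _; rewrite /= H. Qed.

Lemma inputs_fun n (h : nat -> color) :
  inputs [ffun m : 'I_n => h (nat_of_ord m)] = map h (iota 0 n).
Proof. by rewrite /inputs -val_enum_ord -map_comp; apply: eq_map => m; rewrite ffunE. Qed.

Lemma size_inputs n (u : {ffun 'I_n -> color}) : size (inputs u) = n.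
Proof. by rewrite /inputs size_map size_enum_ord. Qed.

Lemma nth_inputs n (u : {ffun 'I_n -> color}) (i : 'I_n) : nth cR (inputs u) i = u i.
Proof. rewrite /inputs (nth_map i); last by rewrite size_enum_ord. by rewrite nth_ord_enum. Qed.

Lemma inputs_inj n (u v : {ffun 'I_n -> color}) : inputs u = inputs v -> u = v.
Proof. by move=> H; apply/ffunP => i; rewrite -!nth_inputs H. Qed.

Lemma map_const_in (h : nat -> color) c (l : seq nat) :
  {in l, forall m, h m = c} -> map h l = nseq (size l) c.
Proof.
elim: l => [//|a l IH] H /=; rewrite H ?mem_head // IH //.
by move=> m Hm; apply: H; rewrite in_cons Hm orbT.
Qed.

Lemma inputs_canon n i j : (i + j <= n)%N ->
  inputs (canon_input n i j) = nseq i cR ++ nseq j cG ++ nseq (n - i - j) cB.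
Proof.
move=> Hij.
rewrite /canon_input (inputs_fun _ (fun m => if (m < i)%N then cR else if (m < i + j)%N then cG else cB)).
have -> : n = (i + (j + (n - i - j)))%N by lia.
rewrite !iotaD !map_cat add0n.
rewrite (@map_const_in _ cR); last by move=> m; rewrite mem_iota => /andP [_ ->].
rewrite (@map_const_in _ cG); last first.
  by move=> m; rewrite mem_iota => /andP [H1 H2]; rewrite ltnNge H1 /= H2.
rewrite (@map_const_in _ cB); last first.
  move=> m; rewrite mem_iota => /andP [H1 H2].
  by rewrite ltnNge (leq_trans (leq_addr _ _) H1) /= ltnNge H1.
rewrite !size_iota; do 2 congr (_ ++ _); congr nseq; lia.
Qed.

Lemma count_canon n i j c : (i + j <= n)%N ->
  count_mem c (inputs (canon_input n i j)) =
  match c with cR => i | cG => j | cB => (n - i - j)%N end.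
Proof.
move=> H; rewrite inputs_canon // !count_cat !count_nseq.
case: c; rewrite /= ?eqC /=; lia.
Qed.

Lemma sub3 a b c N : (a + b + c)%N = N -> (N - a - b)%N = c.
Proof. lia. Qed.

Lemma sym_canon n (g : signature n) (u : {ffun 'I_n -> color}) :
  sym_signature g ->
  g u = g (canon_input n (count_mem cR (inputs u)) (count_mem cG (inputs u))).
Proof.
move=> Hs.
set v := canon_input _ _ _.
have Hle : (count_mem cR (inputs u) + count_mem cG (inputs u) <= n)%N.
  by have := count3 (inputs u); rewrite size_inputs; lia.
have Hp : perm_eq (inputs v) [tuple u i | i < n].
  apply: perm_counts => c; rewrite count_canon //.
  have -> : val [tuple u i | i < n] = inputs u by [].
  case: c => //; have H3 := count3 (inputs u); rewrite size_inputs in H3; apply: sub3; exact H3.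
case/tuple_permP: Hp => p Hp.
suff -> : v = [ffun m => u (p m)] by rewrite Hs.
apply: inputs_inj; rewrite Hp /inputs /=.
by apply: eq_map => m; rewrite ffunE tnth_mktuple.
Qed.

Definition fvec n (g : signature n) : tri :=
  Tri (g (canon_input n n 0)) (g (canon_input n n.-1 1)) (g (canon_input n n.-1 0)).
Arguments fvec {n}.

Lemma fib_base s x y t n (g : signature n) i j k :
  (j + k <= 1)%N -> (i + j + k)%N = n ->
  g (canon_input n i j) = dot (fvec g) (M s x y t j k).
Proof.
case: j k => [|[|j]] [|[|k]] Hjk Hn; try lia.
- have -> : i = n by lia.
  rewrite /dot /fvec /M /e0; cbn [iter c0 c1 c2]; ring.
- have -> : i = n.-1 by lia.
  rewrite /dot /fvec /M /e0 /mulB; cbn [iter c0 c1 c2]; ring.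
- have -> : i = n.-1 by lia.
  rewrite /dot /fvec /M /e0 /mulG; cbn [iter c0 c1 c2]; ring.
Qed.

Lemma fib_canon s x y t (hc : s * y + x * t + 1 = x ^+ 2 + y ^+ 2) n (g : signature n) :
  gen_fib_gate g s x y t ->
  forall d i j k, (j + k <= d)%N -> (i + j + k)%N = n ->
  g (canon_input n i j) = dot (fvec g) (M s x y t j k).
Proof.
move=> Hf d; elim: d => [|d IH] i j k Hd Hn; first by apply: fib_base => //; lia.
case: (leqP (j + k) 1) => Hjk; first by apply: fib_base.
case: Hf => [Hn1|Hrec]; first by lia.
case: (leqP 2 j) => Hj.
  have [j' Ej] : exists j', j = j'.+2 by exists (j - 2)%N; lia.
  subst j.
  have [E _ _] := Hrec i.+2 j' k ltac:(lia) ltac:(lia).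
  unfold Defs.gval in E; rewrite !subSS !subn0 ?addn2 ?addn1 in E.
  rewrite E M_rec1 // !dot_add !dot_scale.
  rewrite (IH i.+2 j' k) ?(IH i.+1 j'.+1 k) ?(IH i.+1 j' k.+1); try lia.
  by rewrite addrA.
case: (leqP 2 k) => Hk.
  have [k' Ek] : exists k', k = k'.+2 by exists (k - 2)%N; lia.
  subst k.
  have [_ _ E] := Hrec i.+2 j k' ltac:(lia) ltac:(lia).
  unfold Defs.gval in E; rewrite !subSS !subn0 ?addn2 ?addn1 in E.
  rewrite E M_rec3 // !dot_add !dot_scale.
  rewrite (IH i.+2 j k') ?(IH i.+1 j.+1 k') ?(IH i.+1 j k'.+1); try lia.
  by rewrite addrA.
have [Ej Ek] : j = 1%N /\ k = 1%N by lia.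
subst j k.
have [_ E _] := Hrec i.+2 0 0 ltac:(lia) ltac:(lia).
unfold Defs.gval in E; rewrite !subSS !subn0 !add0n in E.
rewrite E M_rec2 // !dot_add !dot_scale.
by rewrite (IH i.+1 1 0) ?(IH i.+1 0 1); try lia.
Qed.

Lemma fib_char s x y t (hc : s * y + x * t + 1 = x ^+ 2 + y ^+ 2) n (g : signature n) :
  sym_signature g -> gen_fib_gate g s x y t -> forall u,
  g u = dot (fvec g) (M s x y t (count_mem cG (inputs u)) (count_mem cB (inputs u))).
Proof.
move=> Hs Hf u; rewrite {1}(@sym_canon n g u Hs).
have H3 := count3 (inputs u); rewrite size_inputs in H3.
apply: (@fib_canon s x y t hc n g Hf n); lia.
Qed.

Lemma inputs_left r w (u : {ffun 'I_(r + w) -> color}) z :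
  inputs [ffun m : 'I_r.+1 => if (m < r)%N then nth cR (inputs u) m else z]
  = take r (inputs u) ++ [:: z].
Proof.
rewrite (inputs_fun _ (fun m => if (m < r)%N then nth cR (inputs u) m else z)).
rewrite -addn1 iotaD map_cat /= add0n ltnn; congr (_ ++ _).
rewrite -(map_nth_iota0 cR); last by rewrite size_inputs leq_addr.
by apply/eq_in_map => m; rewrite mem_iota => /andP [_ ->].
Qed.

Lemma inputs_right r w (u : {ffun 'I_(r + w) -> color}) z :
  inputs [ffun m : 'I_w.+1 => if (m < w)%N then nth cR (inputs u) (r + m) else z]
  = drop r (inputs u) ++ [:: z].
Proof.
rewrite (inputs_fun _ (fun m => if (m < w)%N then nth cR (inputs u) (r + m) else z)).
rewrite -addn1 iotaD map_cat /= add0n ltnn; congr (_ ++ _).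
rewrite -(take_oversize (s := drop r (inputs u)) (n := w)); last first.
  by rewrite size_drop size_inputs; lia.
rewrite -(map_nth_iota cR); last by rewrite size_inputs; lia.
rewrite (_ : iota r w = map (addn r) (iota 0 w)); last by rewrite -iotaDl addn0.
rewrite -map_comp.
by apply/eq_in_map => m; rewrite mem_iota => /andP [_ ->].
Qed.

Lemma M_rcons s x y t (hc : s * y + x * t + 1 = x ^+ 2 + y ^+ 2) (l : seq color) z :
  M s x y t (count_mem cG (l ++ [:: z])) (count_mem cB (l ++ [:: z]))
  = mulc s x y t z (M s x y t (count_mem cG l) (count_mem cB l)).
Proof.
rewrite !count_cat; case: z => /=; rewrite ?eqC /= ?addn0 ?addn1 //.
by rewrite MB.
Qed.

Lemma contract_char s x y t (hc : s * y + x * t + 1 = x ^+ 2 + y ^+ 2) r w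
  (F : signature r.+1) (G : signature w.+1) :
  sym_signature F -> sym_signature G ->
  gen_fib_gate F s x y t -> gen_fib_gate G s x y t -> forall u,
  contract F G u = Bil s x y t (fvec F) (fvec G)
     (M s x y t (count_mem cG (inputs u)) (count_mem cB (inputs u))) (e0).
Proof.
move=> sF sG fF fG u; rewrite /contract.
transitivity (Bil s x y t (fvec F) (fvec G)
  (M s x y t (count_mem cG (take r (inputs u))) (count_mem cB (take r (inputs u))))
  (M s x y t (count_mem cG (drop r (inputs u))) (count_mem cB (drop r (inputs u))))).
  rewrite /Bil; apply: eq_bigr => z _.
  rewrite (@fib_char s x y t hc _ F sF fF) (@fib_char s x y t hc _ G sG fG) inputs_left inputs_right.
  by rewrite !(@M_rcons s x y t hc).
rewrite BilM //; congr (Bil _ _ _ _ _ _ (M _ _ _ _ _ _) _); by rewrite -count_cat cat_take_drop.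
Qed.

Lemma cnt_perm n (u : {ffun 'I_n -> color}) (p : 'S_n) c :
  count_mem c (inputs [ffun m => u (p m)]) = count_mem c (inputs u).
Proof.
have Hp : perm_eq (inputs [ffun m => u (p m)]) [tuple u i | i < n].
  apply/tuple_permP; exists p; rewrite /inputs /=.
  by apply: eq_map => m; rewrite ffunE tnth_mktuple.
by move/seq.permP: Hp => /(_ (pred1 c)).
Qed.

Theorem mainTheorem5 (s x y t : CC) (r w : nat)
    (F : signature r.+1) (G : signature w.+1) :
  s * y + x * t + 1 = x ^+ 2 + y ^+ 2 ->
  sym_signature F -> sym_signature G ->
  gen_fib_gate F s x y t -> gen_fib_gate G s x y t ->
  sym_signature (contract F G) /\ gen_fib_gate (contract F G) s x y t.
Proof.
move=> hc sF sG fF fG.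
have HC := @contract_char s x y t hc r w F G sF sG fF fG.
split.
  by move=> p u; rewrite !HC !cnt_perm.
case: (leqP (r + w) 1) => Hrw; [by left | right].
move=> i j k Hn Hi.
rewrite /Defs.gval !HC !count_canon; try lia.
have -> : (r + w - (i - 2) - (j + 2) = k)%N by lia.
have -> : (r + w - i - j = k)%N by lia.
have -> : (r + w - (i - 1) - (j + 1) = k)%N by lia.
have -> : (r + w - (i - 1) - j = k.+1)%N by lia.
have -> : (r + w - (i - 2) - (j + 1) = k.+1)%N by lia.
have -> : (r + w - (i - 2) - j = k.+2)%N by lia.
rewrite !addn2 !addn1.
split.
- by rewrite M_rec1 // !Bil_add !Bil_scale addrA.
- by rewrite M_rec2 // !Bil_add !Bil_scale.
- by rewrite M_rec3 // !Bil_add !Bil_scale addrA.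
Qed.
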